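(* For every $t=0,1,\dots,T-1$, the functions $\omega_t$ and $\bar\omega_t$ are nondecreasing on $\mathbb R$.
   Context: Model. Fix an integer horizon $T\ge 2$, a discount factor $\alpha\in(0,1]$, and for $t=0,\dots,T-1$: unit ordering costs $c_t\in\mathbb R$, a salvage coefficient $c_T\in\mathbb R$, setup costs $K_t\ge 0$, functions $G_t:\mathbb R\to\mathbb R$, and independent nonnegative random demands $D_0,\dots,D_{T-1}$ with right-continuous distribution functions $F_t$ and finite means; all expectations appearing are assumed finite. Put $C_t(y)=(c_t-\alpha c_{t+1})y+G_t(y)+\alpha c_{t+1}E[D_t]$. Standing assumptions: (i) each $C_t$ is convex with $C_t(y)\to+\infty$ as $|y|\to\infty$; (ii) $K_t\ge \alpha K_{t+1}$ for $t=0,\dots,T-2$; (iii) there are constants $\gamma_t\ge 0$ with $|C_t(x)-C_t(y)|\le\gamma_t|x-y|$ for all $x,y$. Grid construction. Fix $\theta>0$, $z_m=m\theta$, $Z_\theta=\{z_m:m\in\mathbb Z\}$, $f_t(n)=F_t(z_{n+1})-F_t(z_n)$ ($n\ge -1$). $C^m_t=\min\{y: C_t(y)=\min_x C_t(x)\}$; with $z_{n_0}<C^m_t\le z_{n_0+1}$, $S^U_t=\min\{z_m\in Z_\theta: z_m\ge C^m_t,\ C_t(z_m)>C_t(z_{n_0})+K_t\}$. $s_{T-1}$ is a point with $s_{T-1}\le C^m_{T-1}$, $C_{T-1}(s_{T-1})=C_{T-1}(C^m_{T-1})+K_{T-1}$; $\bar I_{T-1}=s_{T-1}$. For $t=T-2,\dots,0$: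 $I_t=\max\{z_m\in Z_\theta: z_m<\min(\bar I_{t+1}-\theta,C^m_t)\}$, $\bar I_t=\max\{z_m\in Z_\theta: z_m\le I_t,\ C_t(z_m)>C_t(I_t)+K_t\}+\theta$. $H_{T-1}=C_{T-1}$, $S_{T-1}=C^m_{T-1}$; $V_t(y)=H_t(S_t)+K_t$ for $y<s_t$, $V_t(y)=H_t(y)$ for $y\ge s_t$. For $t=T-2,\dots,0$: $H_t(y)=C_t(y)+\alpha\sum_{n=-1}^\infty V_{t+1}(y-z_n)f_t(n)$; $S_t=\max\{z_m\in Z_\theta: I_t\le z_m\le S^U_t,\ H_t(z_m)=\min\{H_t(z_n):z_n\in Z_\theta, I_t\le z_n\le S^U_t\}\}$; $s_t=S_t$ if $K_t=0$, else $s_t=\min\{z_m\in Z_\theta:\bar I_t\le z_m\le S_t,\ H_t(z_m)\le H_t(S_t)+K_t\}$. Estimate functions. $\psi_{T-1}(x,y)=\bar\psi_{T-1}(x,y)=\gamma_{T-1}x$; $\varphi_{T-1}(x,y)=\bar\varphi_{T-1}(x,y)=0$ if $y<s_{T-1}$ and $=\gamma_{T-1}x$ if $y\ge s_{T-1}$. For $t=0,\dots,T-2$, with $n$ the integer such that $z_{n-1}\le y-s_{t+1}<z_n$: $\psi_t(x,y)=\gamma_tx$ if $y<s_{t+1}-\theta$, else $\psi_t(x,y)=\gamma_tx+\alpha\sum_{m=-1}^{n-1}\varphi_{t+1}(x,y-z_m)f_t(m)$; $\varphi_t(x,y)=0$ if $y<s_t$, $=\psi_t(y-s_t,y)$ if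 $y\ge s_t$ and $y-x<s_t$, $=\psi_t(x,y)$ if $y\ge s_t$ and $y-x\ge s_t$. Likewise $\bar\psi_t(x,y)=\gamma_tx$ if $y<s_{t+1}-\theta$, else $\bar\psi_t(x,y)=\gamma_tx+\alpha\sum_{m=-1}^{n-1}\bar\varphi_{t+1}(x,y-z_m)f_t(m)$; $\bar\varphi_t(x,y)=0$ if $y<s_t$, $=\bar\psi_t(y-s_t+\theta,y)$ if $y\ge s_t$ and $y-x<s_t$, $=\bar\psi_t(x,y)$ if $y\ge s_t$ and $y-x\ge s_t$. Error-bound functions. $\omega_{T-1}\equiv\bar\omega_{T-1}\equiv 0$, $\eta_{T-1}=0$. For $t=T-2,\dots,0$: $\omega_t(x)=\psi_t(\theta,x)-\gamma_t\theta+\alpha\sum_{n=-1}^\infty\bar\omega_{t+1}(x-z_n)f_t(n)$; $\eta_t=\bar\psi_t(\theta,S^U_t)+\omega_t(S^U_t)$; $\bar\omega_t(x)=\eta_t$ if $x\le S^U_t$ and $\bar\omega_t(x)=\max(\eta_t,\omega_t(x))$ if $x>S^U_t$. *)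

(* Defs.v *)
From Stdlib Require Import Reals ZArith.
From Coquelicot Require Import Coquelicot.
Open Scope R_scope.

Definition zg (theta : R) (m : Z) : R := IZR m * theta.

Definition on_grid (theta x : R) : Prop := exists m : Z, x = zg theta m.

Definition is_least (P : R -> Prop) (x : R) : Prop := P x /\ forall y, P y -> x <= y.
Definition is_greatest (P : R -> Prop) (x : R) : Prop := P x /\ forall y, P y -> y <= x.

Definition fprob (theta : R) (F : R -> R) (n : Z) : R :=
  F (zg theta (n + 1)) - F (zg theta n).

(* sum_{n=-1}^{oo} g(n) f_t(n), indexing n = k - 1 with k : nat *)
Definition gsum_seq (theta : R) (F : R -> R) (g : Z -> R) : nat -> R :=
  fun k => g (Z.of_nat k - 1)%Z * fprob theta F (Z.of_nat k - 1)%Z.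

Definition is_cdf_nonneg (F : R -> R) : Prop :=
  (forall x y, x <= y -> F x <= F y) /\
  (forall x, filterlim F (at_right x) (locally (F x))) /\
  (forall x, x < 0 -> F x = 0) /\
  filterlim F (Rbar_locally p_infty) (locally 1).

Definition Cfun (alpha : R) (c : nat -> R) (G : nat -> R -> R) (ED : nat -> R)
  (t : nat) (y : R) : R :=
  (c t - alpha * c (t + 1)%nat) * y + G t y + alpha * c (t + 1)%nat * ED t.

Definition convex_fun (g : R -> R) : Prop :=
  forall x y l, 0 <= l <= 1 -> g (l * x + (1 - l) * y) <= l * g x + (1 - l) * g y.

(* Main.v *)
Require Import Defs.
From Stdlib Require Import Reals ZArith Lia Lra.
From Coquelicot Require Import Coquelicot.
Open Scope R_scope.
Lemma zg_le th a b : 0 < th -> (a <= b)%Z -> zg th a <= zg th b.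
Proof. intros h hab; unfold zg. apply Rmult_le_compat_r; [lra|]. now apply IZR_le. Qed.

Lemma n_mono th n n' a a' : 0 < th -> zg th (n-1) <= a < zg th n ->
  zg th (n'-1) <= a' < zg th n' -> a <= a' -> (n <= n')%Z.
Proof.
  intros h [h1 h2] [h3 h4] ha. destruct (Z_le_gt_dec n n') as [|hg]; auto.
  assert (zg th n' <= zg th (n-1)) by (apply zg_le; [lra|lia]). lra.
Qed.

Lemma n_exists th a : 0 < th -> exists n, zg th (n-1) <= a < zg th n.
Proof.
  intros h. destruct (archimed (a/th)) as [h1 h2]. exists (up (a/th)).
  unfold zg. rewrite minus_IZR. split.
  - assert (IZR (up (a/th)) - 1 <= a/th) by lra.
    apply Rmult_le_compat_r with (r:=th) in H; [|lra].
    unfold Rdiv in H. rewrite Rmult_assoc, Rinv_l in H; lra.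
  - apply Rmult_lt_compat_r with (r:=th) in h1; [|lra].
    unfold Rdiv in h1. rewrite Rmult_assoc, Rinv_l in h1; lra.
Qed.

Lemma n_nonneg th n a : 0 < th -> -th <= a -> zg th (n-1) <= a < zg th n -> (0 <= n)%Z.
Proof.
  intros h ha [h1 h2]. destruct (Z_le_gt_dec 0 n); auto.
  assert (zg th n <= zg th (-1)) by (apply zg_le; [lra|lia]). unfold zg in H at 2. simpl in H. lra.
Qed.

Lemma sum_mono f g N M : (forall k, f k <= g k) -> (forall k, 0 <= g k) -> (N <= M)%nat ->
  sum_f_R0 f N <= sum_f_R0 g M.
Proof.
  intros hfg hg hNM. induction hNM.
  - apply sum_Rle; auto.
  - rewrite tech5. specialize (hg (S m)). lra.
Qed.

Lemma fprob_nonneg th F n : 0 < th -> (forall x y, x <= y -> F x <= F y) -> 0 <= fprob th F n.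
Proof.
  intros h hF. unfold fprob. assert (F (zg th n) <= F (zg th (n+1))); [|lra].
  apply hF, zg_le; [lra|lia].
Qed.

Lemma series_mono a b : ex_series a -> ex_series b -> (forall n, a n <= b n) -> Series a <= Series b.
Proof.
  intros ha hb hab.
  assert (0 <= Series (fun n => b n - a n)).
  { assert (Series (fun _ : nat => 0) = 0).
    { rewrite (Series_ext _ (fun n => 0 * a n)) by (intro; ring). rewrite Series_scal_l. ring. }
    rewrite <- H. apply Series_le; [intro n; specialize (hab n); lra|].
    pose proof (ex_series_minus b a hb ha). apply (ex_series_ext _ _ (fun n => eq_refl)) in H0. exact H0. }
  rewrite Series_minus in H; auto. lra.
Qed.

Theorem lemma4p6
  (T : nat) (alpha theta : R) (c : nat -> R) (K : nat -> R)
  (G : nat -> R -> R) (F : nat -> R -> R) (ED : nat -> R) (gamma : nat -> R)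
  (Cm SU s S I Ibar : nat -> R) (H V : nat -> R -> R)
  (psi phi psib phib : nat -> R -> R -> R)
  (omega omegab : nat -> R -> R) (eta : nat -> R)
  (* model *)
  (hT : (2 <= T)%nat)
  (halpha : 0 < alpha <= 1)
  (htheta : 0 < theta)
  (hK : forall t, (t < T)%nat -> 0 <= K t)
  (hF : forall t, (t < T)%nat -> is_cdf_nonneg (F t))
  (hED : forall t, (t < T)%nat ->
     is_RInt_gen (fun x => 1 - F t x) (at_point 0) (Rbar_locally p_infty) (ED t))
  (* standing assumptions *)
  (hconv : forall t, (t < T)%nat -> convex_fun (Cfun alpha c G ED t))
  (hcoerp : forall t, (t < T)%nat -> is_lim (Cfun alpha c G ED t) p_infty p_infty)
  (hcoerm : forall t, (t < T)%nat -> is_lim (Cfun alpha c G ED t) m_infty p_infty)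
  (hKdec : forall t, (t + 1 < T)%nat -> K t >= alpha * K (t + 1)%nat)
  (hgamma : forall t, (t < T)%nat -> 0 <= gamma t)
  (hlip : forall t, (t < T)%nat -> forall x y,
     Rabs (Cfun alpha c G ED t x - Cfun alpha c G ED t y) <= gamma t * Rabs (x - y))
  (* grid construction *)
  (hCm : forall t, (t < T)%nat ->
     is_least (fun y => forall x, Cfun alpha c G ED t y <= Cfun alpha c G ED t x) (Cm t))
  (hSU : forall t (n0 : Z), (t < T)%nat ->
     zg theta n0 < Cm t <= zg theta (n0 + 1) ->
     is_least (fun z => on_grid theta z /\ Cm t <= z /\
        Cfun alpha c G ED t z > Cfun alpha c G ED t (zg theta n0) + K t) (SU t))
  (hsT : s (T - 1)%nat <= Cm (T - 1)%nat /\
     Cfun alpha c G ED (T - 1)%nat (s (T - 1)%nat)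
       = Cfun alpha c G ED (T - 1)%nat (Cm (T - 1)%nat) + K (T - 1)%nat)
  (hIbarT : Ibar (T - 1)%nat = s (T - 1)%nat)
  (hI : forall t, (t + 1 < T)%nat ->
     is_greatest (fun z => on_grid theta z /\ z < Rmin (Ibar (t + 1)%nat - theta) (Cm t)) (I t))
  (hIbar : forall t, (t + 1 < T)%nat ->
     is_greatest (fun z => on_grid theta z /\ z <= I t /\
        Cfun alpha c G ED t z > Cfun alpha c G ED t (I t) + K t) (Ibar t - theta))
  (hHT : forall y, H (T - 1)%nat y = Cfun alpha c G ED (T - 1)%nat y)
  (hST : S (T - 1)%nat = Cm (T - 1)%nat)
  (hV : forall t y, (t < T)%nat ->
     (y < s t -> V t y = H t (S t) + K t) /\ (s t <= y -> V t y = H t y))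
  (hHcv : forall t y, (t + 1 < T)%nat ->
     ex_series (gsum_seq theta (F t) (fun n => V (t + 1)%nat (y - zg theta n))))
  (hH : forall t y, (t + 1 < T)%nat ->
     H t y = Cfun alpha c G ED t y
             + alpha * Series (gsum_seq theta (F t) (fun n => V (t + 1)%nat (y - zg theta n))))
  (hS : forall t, (t + 1 < T)%nat ->
     is_greatest (fun z => on_grid theta z /\ I t <= z <= SU t /\
        forall w, on_grid theta w -> I t <= w <= SU t -> H t z <= H t w) (S t))
  (hs0 : forall t, (t + 1 < T)%nat -> K t = 0 -> s t = S t)
  (hs : forall t, (t + 1 < T)%nat -> K t <> 0 ->
     is_least (fun z => on_grid theta z /\ Ibar t <= z <= S t /\
        H t z <= H t (S t) + K t) (s t))
  (* estimate functions *)
  (hpsiT : forall x y, psi (T - 1)%nat x y = gamma (T - 1)%nat * x)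
  (hpsibT : forall x y, psib (T - 1)%nat x y = gamma (T - 1)%nat * x)
  (hphiT : forall x y, (y < s (T - 1)%nat -> phi (T - 1)%nat x y = 0) /\
     (s (T - 1)%nat <= y -> phi (T - 1)%nat x y = gamma (T - 1)%nat * x))
  (hphibT : forall x y, (y < s (T - 1)%nat -> phib (T - 1)%nat x y = 0) /\
     (s (T - 1)%nat <= y -> phib (T - 1)%nat x y = gamma (T - 1)%nat * x))
  (hpsi0 : forall t x y, (t + 1 < T)%nat -> y < s (t + 1)%nat - theta ->
     psi t x y = gamma t * x)
  (hpsi1 : forall t x y (n : Z), (t + 1 < T)%nat -> s (t + 1)%nat - theta <= y ->
     zg theta (n - 1) <= y - s (t + 1)%nat < zg theta n ->
     psi t x y = gamma t * x + alpha *
       sum_f_R0 (fun k => phi (t + 1)%nat x (y - zg theta (Z.of_nat k - 1))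
                          * fprob theta (F t) (Z.of_nat k - 1)) (Z.to_nat n))
  (hpsib0 : forall t x y, (t + 1 < T)%nat -> y < s (t + 1)%nat - theta ->
     psib t x y = gamma t * x)
  (hpsib1 : forall t x y (n : Z), (t + 1 < T)%nat -> s (t + 1)%nat - theta <= y ->
     zg theta (n - 1) <= y - s (t + 1)%nat < zg theta n ->
     psib t x y = gamma t * x + alpha *
       sum_f_R0 (fun k => phib (t + 1)%nat x (y - zg theta (Z.of_nat k - 1))
                          * fprob theta (F t) (Z.of_nat k - 1)) (Z.to_nat n))
  (hphi : forall t x y, (t + 1 < T)%nat ->
     (y < s t -> phi t x y = 0) /\
     (s t <= y -> y - x < s t -> phi t x y = psi t (y - s t) y) /\
     (s t <= y -> s t <= y - x -> phi t x y = psi t x y))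
  (hphib : forall t x y, (t + 1 < T)%nat ->
     (y < s t -> phib t x y = 0) /\
     (s t <= y -> y - x < s t -> phib t x y = psib t (y - s t + theta) y) /\
     (s t <= y -> s t <= y - x -> phib t x y = psib t x y))
  (* error-bound functions *)
  (homT : forall x, omega (T - 1)%nat x = 0)
  (hombT : forall x, omegab (T - 1)%nat x = 0)
  (hetaT : eta (T - 1)%nat = 0)
  (homcv : forall t x, (t + 1 < T)%nat ->
     ex_series (gsum_seq theta (F t) (fun n => omegab (t + 1)%nat (x - zg theta n))))
  (hom : forall t x, (t + 1 < T)%nat ->
     omega t x = psi t theta x - gamma t * theta
       + alpha * Series (gsum_seq theta (F t) (fun n => omegab (t + 1)%nat (x - zg theta n))))
  (heta : forall t, (t + 1 < T)%nat -> eta t = psib t theta (SU t) + omega t (SU t))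
  (homb : forall t x, (t + 1 < T)%nat ->
     (x <= SU t -> omegab t x = eta t) /\
     (SU t < x -> omegab t x = Rmax (eta t) (omega t x)))
  : forall t, (t < T)%nat ->
      (forall x y, x <= y -> omega t x <= omega t y) /\
      (forall x y, x <= y -> omegab t x <= omegab t y).
Proof.
  assert (hFm : forall t, (t < T)%nat -> forall n, 0 <= fprob theta (F t) n).
  { intros t ht n. apply fprob_nonneg; auto. apply (hF t ht). }
  set (Qphi := fun t => forall x x' y y', 0 <= x <= x' -> y <= y' ->
     0 <= phi t x y <= phi t x' y').
  set (Qpsi := fun t => forall x x' y y', 0 <= x <= x' -> y <= y' ->
     0 <= psi t x y <= psi t x' y').
  assert (stepA : forall t, (t + 1 < T)%nat -> Qphi (t+1)%nat -> Qpsi t).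
  { intros t ht Q x x' y y' hx hy.
    assert (hg := hgamma t ltac:(lia)).
    assert (hgx : 0 <= gamma t * x <= gamma t * x').
    { split; [apply Rmult_le_pos; lra| apply Rmult_le_compat_l; lra]. }
    assert (hsum : forall x0 y0 n, 0 <= x0 -> 0 <= sum_f_R0 (fun k => phi (t + 1)%nat x0 (y0 - zg theta (Z.of_nat k - 1))
                          * fprob theta (F t) (Z.of_nat k - 1)) n).
    { intros x0 y0 n hx0. apply cond_pos_sum. intro k. apply Rmult_le_pos.
      - apply (Q x0 x0 _ _ ltac:(lra) (Rle_refl _)).
      - apply hFm; lia. }
    destruct (Rlt_le_dec y' (s (t+1)%nat - theta)) as [h1|h1].
    { rewrite (hpsi0 t x y), (hpsi0 t x' y'); auto; lra. }
    destruct (n_exists theta (y' - s (t+1)%nat) htheta) as [n' hn'].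
    rewrite (hpsi1 t x' y' n'); auto.
    assert (hs' := hsum x' y' (Z.to_nat n') ltac:(lra)).
    destruct (Rlt_le_dec y (s (t+1)%nat - theta)) as [h2|h2].
    { rewrite (hpsi0 t x y); auto. split; [lra|]. 
      assert (0 <= alpha * sum_f_R0 (fun k => phi (t + 1)%nat x' (y' - zg theta (Z.of_nat k - 1))
                          * fprob theta (F t) (Z.of_nat k - 1)) (Z.to_nat n')) by (apply Rmult_le_pos; lra).
      lra. }
    destruct (n_exists theta (y - s (t+1)%nat) htheta) as [n hn].
    rewrite (hpsi1 t x y n); auto.
    assert (hs1 := hsum x y (Z.to_nat n) ltac:(lra)).
    assert (hnn : (n <= n')%Z) by (apply (n_mono theta n n' (y - s (t+1)%nat) (y' - s (t+1)%nat)); auto; lra).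
    split.
    - assert (0 <= alpha * sum_f_R0 (fun k => phi (t + 1)%nat x (y - zg theta (Z.of_nat k - 1))
                          * fprob theta (F t) (Z.of_nat k - 1)) (Z.to_nat n)) by (apply Rmult_le_pos; lra).
      lra.
    - assert (sum_f_R0 (fun k => phi (t + 1)%nat x (y - zg theta (Z.of_nat k - 1))
                          * fprob theta (F t) (Z.of_nat k - 1)) (Z.to_nat n) <=
              sum_f_R0 (fun k => phi (t + 1)%nat x' (y' - zg theta (Z.of_nat k - 1))
                          * fprob theta (F t) (Z.of_nat k - 1)) (Z.to_nat n')).
      { apply sum_mono.
        - intro k. apply Rmult_le_compat_r; [apply hFm; lia|].
          apply (Q x x' _ _ hx). lra.
        - intro k. apply Rmult_le_pos; [apply (Q x' x' _ _ ltac:(lra) (Rle_refl _))|apply hFm; lia].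
        - lia. }
      assert (alpha * sum_f_R0 (fun k => phi (t + 1)%nat x (y - zg theta (Z.of_nat k - 1))
                          * fprob theta (F t) (Z.of_nat k - 1)) (Z.to_nat n) <=
              alpha * sum_f_R0 (fun k => phi (t + 1)%nat x' (y' - zg theta (Z.of_nat k - 1))
                          * fprob theta (F t) (Z.of_nat k - 1)) (Z.to_nat n')) by (apply Rmult_le_compat_l; lra).
      lra. }
  assert (stepB : forall t, (t + 1 < T)%nat -> Qpsi t -> Qphi t).
  { intros t ht Q.
    assert (heq : forall x y, s t <= y -> phi t x y = psi t (Rmin x (y - s t)) y).
    { intros x y hy. destruct (hphi t x y ht) as [_ [h2 h3]].
      destruct (Rlt_le_dec (y - x) (s t)) as [h|h].
      - rewrite h2 by auto. rewrite Rmin_right by lra. auto.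
      - rewrite h3 by auto. rewrite Rmin_left by lra. auto. }
    intros x x' y y' hx hy.
    destruct (Rlt_le_dec y' (s t)) as [h1|h1].
    { rewrite (proj1 (hphi t x y ht)), (proj1 (hphi t x' y' ht)) by lra. lra. }
    rewrite (heq x' y') by auto.
    assert (hm' : 0 <= Rmin x' (y' - s t)) by (apply Rmin_glb; lra).
    destruct (Rlt_le_dec y (s t)) as [h2|h2].
    { rewrite (proj1 (hphi t x y ht)) by lra. split; [lra|].
      apply (proj1 (Q (Rmin x' (y' - s t)) (Rmin x' (y' - s t)) y' y' ltac:(lra) (Rle_refl _))). }
    rewrite (heq x y) by auto.
    apply Q; auto. split; [apply Rmin_glb; lra|].
    apply Rle_trans with (Rmin x' (y - s t)); [apply Rle_min_compat_r|apply Rle_min_compat_l]; lra. }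
  assert (QT : Qphi (T-1)%nat).
  { intros x x' y y' hx hy. assert (hg := hgamma (T-1)%nat ltac:(lia)).
    destruct (hphiT x y) as [a1 a2]. destruct (hphiT x' y') as [b1 b2].
    destruct (Rlt_le_dec y' (s (T-1)%nat)) as [h1|h1].
    { rewrite a1, b1 by lra. lra. }
    rewrite b2 by lra.
    assert (0 <= gamma (T - 1)%nat * x') by (apply Rmult_le_pos; lra).
    destruct (Rlt_le_dec y (s (T-1)%nat)) as [h2|h2].
    { rewrite a1 by lra. lra. }
    rewrite a2 by lra. split; [apply Rmult_le_pos; lra| apply Rmult_le_compat_l; lra]. }
  assert (Qall : forall d, (d < T)%nat -> Qphi (T - 1 - d)%nat).
  { induction d as [|d IH]; intro hd.
    - replace (T - 1 - 0)%nat with (T-1)%nat by lia. exact QT.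
    - assert (IH' := IH ltac:(lia)).
      assert (e : (T - 1 - d = (T - 1 - Datatypes.S d) + 1)%nat) by lia. rewrite e in IH'.
      apply stepB; [lia|]. apply stepA; [lia|exact IH']. }
  assert (Qpsiall : forall t, (t + 1 < T)%nat -> Qpsi t).
  { intros t ht. apply stepA; auto.
    replace (t+1)%nat with (T - 1 - (T - 2 - t))%nat by lia. apply Qall. lia. }
  assert (stepD : forall t, (t + 1 < T)%nat ->
     (forall x y, x <= y -> omegab (t+1)%nat x <= omegab (t+1)%nat y) ->
     forall x y, x <= y -> omega t x <= omega t y).
  { intros t ht Hb x y hxy. rewrite (hom t x ht), (hom t y ht).
    assert (psi t theta x <= psi t theta y) by (apply (Qpsiall t ht); lra).
    assert (Series (gsum_seq theta (F t) (fun n => omegab (t + 1)%nat (x - zg theta n))) <=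
            Series (gsum_seq theta (F t) (fun n => omegab (t + 1)%nat (y - zg theta n)))).
    { apply series_mono; auto. intro n. unfold gsum_seq.
      apply Rmult_le_compat_r; [apply hFm; lia|]. apply Hb. lra. }
    assert (alpha * Series (gsum_seq theta (F t) (fun n => omegab (t + 1)%nat (x - zg theta n))) <=
            alpha * Series (gsum_seq theta (F t) (fun n => omegab (t + 1)%nat (y - zg theta n))))
      by (apply Rmult_le_compat_l; lra).
    lra. }
  assert (stepE : forall t, (t + 1 < T)%nat ->
     (forall x y, x <= y -> omega t x <= omega t y) ->
     forall x y, x <= y -> omegab t x <= omegab t y).
  { intros t ht Ho x y hxy.
    destruct (homb t x ht) as [a1 a2]. destruct (homb t y ht) as [b1 b2].
    destruct (Rle_lt_dec y (SU t)) as [h1|h1].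
    { rewrite a1, b1 by lra. lra. }
    rewrite b2 by lra.
    destruct (Rle_lt_dec x (SU t)) as [h2|h2].
    { rewrite a1 by lra. apply Rmax_l. }
    rewrite a2 by lra. apply Rle_max_compat_l. auto. }
  assert (Oall : forall d, (d < T)%nat ->
     (forall x y, x <= y -> omega (T-1-d)%nat x <= omega (T-1-d)%nat y) /\
     (forall x y, x <= y -> omegab (T-1-d)%nat x <= omegab (T-1-d)%nat y)).
  { induction d as [|d IH]; intro hd.
    - replace (T - 1 - 0)%nat with (T-1)%nat by lia.
      split; intros; rewrite ?homT, ?hombT; lra.
    - destruct (IH ltac:(lia)) as [_ IHb].
      assert (e : (T - 1 - d = (T - 1 - Datatypes.S d) + 1)%nat) by lia. rewrite e in IHb.
      assert (Ho := stepD (T - 1 - Datatypes.S d)%nat ltac:(lia) IHb).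
      split; auto. apply stepE; [lia|exact Ho]. }
  intros t ht. replace t with (T - 1 - (T - 1 - t))%nat by lia. apply Oall. lia.
Qed.
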